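(* Let $\widehat{\Sigma}\in\mathbb{R}^{p\times p}$ with $\widehat{\Sigma}\succeq 0$, let $\theta_0\in\mathbb{R}^p$ with $s_0=\|\theta_0\|_0$, and let $\xi>0$. Let $\widehat{\theta}^{\mathrm{ZN}}=\widehat{\theta}^{\mathrm{ZN}}(\xi)$ be a minimizer of $$\theta\mapsto \frac{1}{2}\langle \theta-\theta_0,\widehat{\Sigma}(\theta-\theta_0)\rangle+\xi\|\theta\|_1$$ over $\theta\in\mathbb{R}^p$. Then $$\|\widehat{\theta}^{\mathrm{ZN}}\|_0\le\Big(1+\frac{4\|\widehat{\Sigma}\|_2}{\widehat{\kappa}(s_0,1)}\Big)s_0 .$$
   Context: $\|\cdot\|_0$ counts nonzero entries; $\|\widehat\Sigma\|_2$ is the spectral norm. The restricted eigenvalue constant is $\widehat{\kappa}(s,c_0)=\min_{J\subseteq[p],|J|\le s}\ \min_{u\in\mathbb{R}^p,\ \|u_{J^c}\|_1\le c_0\|u_J\|_1}\frac{\langle u,\widehat{\Sigma}u\rangle}{\|u\|_2^2}$, where $u_J$ is the restriction of $u$ to the indices in $J$. In the paper $\widehat\Sigma={\mathbf X}^{\sf T}{\mathbf X}/n$ for a design matrix ${\mathbf X}\in\mathbb{R}^{n\times p}$. *)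

(* Defs.v *)
From HB Require Import structures.
From mathcomp Require Import all_boot all_order all_algebra.
From mathcomp Require Import boolp classical_sets reals.
Set Implicit Arguments. Unset Strict Implicit. Unset Printing Implicit Defensive.
Import Order.TTheory GRing.Theory Num.Theory.
Local Open Scope ring_scope.
Local Open Scope classical_set_scope.

Section Defs.
Variables (R : realType) (p : nat).

Definition dotv (u v : 'cV[R]_p) : R := \sum_(i < p) u i 0 * v i 0.

Definition norm1 (u : 'cV[R]_p) : R := \sum_(i < p) `|u i 0|.
Definition norm2 (u : 'cV[R]_p) : R := Num.sqrt (dotv u u).
Definition norm0 (u : 'cV[R]_p) : nat := #|[set i : 'I_p | u i 0 != 0]|.

Definition norm1_on (J : {set 'I_p}) (u : 'cV[R]_p) : R := \sum_(i in J) `|u i 0|.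

Definition psd (S : 'M[R]_p) : Prop :=
  S^T = S /\ forall u : 'cV[R]_p, 0 <= dotv u (S *m u).

Definition specnorm (S : 'M[R]_p) : R :=
  sup [set norm2 (S *m u) | u in [set u : 'cV[R]_p | norm2 u <= 1]].

Definition re_const (S : 'M[R]_p) (s : nat) (c0 : R) : R :=
  inf [set dotv u (S *m u) / (norm2 u ^+ 2) | u in
        [set u : 'cV[R]_p | u != 0 /\ exists J : {set 'I_p},
           (#|J| <= s)%N /\ norm1_on (~: J) u <= c0 * norm1_on J u]].

Definition zn_obj (S : 'M[R]_p) (theta0 : 'cV[R]_p) (xi : R) (theta : 'cV[R]_p) : R :=
  2^-1 * dotv (theta - theta0) (S *m (theta - theta0)) + xi * norm1 theta.

End Defs.

(* Main.v *)
Require Import Defs.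
From HB Require Import structures.
From mathcomp Require Import all_boot all_order all_algebra.
From mathcomp Require Import boolp classical_sets reals.
From mathcomp.algebra_tactics Require Import ring lra.
Import Order.TTheory GRing.Theory Num.Theory.
Local Open Scope ring_scope.

Section L.
Context {R : realType} {p : nat}.
Implicit Types (a b c x y : 'cV[R]_p) (S : 'M[R]_p).

Lemma dotvC a b : dotv a b = dotv b a.
Proof. by apply: eq_bigr => i _; rewrite mulrC. Qed.

Lemma dotvDl a b c : dotv (a + b) c = dotv a c + dotv b c.
Proof. by rewrite /dotv -big_split; apply: eq_bigr => i _; rewrite !mxE mulrDl. Qed.

Lemma dotvZl t a c : dotv (t *: a) c = t * dotv a c.
Proof. by rewrite /dotv mulr_sumr; apply: eq_bigr => i _; rewrite !mxE mulrA. Qed.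

Lemma dotvDr a b c : dotv c (a + b) = dotv c a + dotv c b.
Proof. by rewrite !(dotvC c) dotvDl. Qed.

Lemma dotvZr t a c : dotv c (t *: a) = t * dotv c a.
Proof. by rewrite !(dotvC c) dotvZl. Qed.

Lemma dotv0r a : dotv a 0 = 0.
Proof. by rewrite /dotv big1 // => i _; rewrite mxE mulr0. Qed.

Lemma dotv_ge0 a : 0 <= dotv a a.
Proof. by apply: sumr_ge0 => i _; rewrite -expr2 sqr_ge0. Qed.

Lemma dotv_eq0 a : dotv a a = 0 -> a = 0.
Proof.
move=> h; apply/matrixP => i j; rewrite (ord1 j) mxE.
have /eqP := h; rewrite psumr_eq0 => [/allP H|k _]; last by rewrite -expr2 sqr_ge0.
by have := H i (mem_index_enum i); rewrite -expr2 sqrf_eq0 => /eqP.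
Qed.

Lemma dotv_sym S a b : S^T = S -> dotv a (S *m b) = dotv b (S *m a).
Proof.
move=> hS; rewrite /dotv.
under eq_bigr do rewrite mxE big_distrr.
rewrite exchange_big; apply: eq_bigr => j _; rewrite mxE big_distrr.
apply: eq_bigr => i _ /=.
by rewrite -{2}hS mxE; ring.
Qed.

Definition Q S a := dotv a (S *m a).

Lemma Q_expand S a b t : S^T = S ->
  Q S (a + t *: b) = Q S a + 2 * t * dotv b (S *m a) + t ^+ 2 * Q S b.
Proof.
move=> hS; rewrite /Q mulmxDr -scalemxAr !(dotvDl, dotvDr, dotvZl, dotvZr).
rewrite (dotv_sym _ a b hS); ring.
Qed.


Lemma disc_le (qa qb B : R) :
  (forall t : R, 0 <= qa + 2 * t * B + t ^+ 2 * qb) -> B ^+ 2 <= qa * qb.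
Proof.
move=> H.
have qb0 : 0 <= qb.
  rewrite leNgt; apply/negP => qbn.
  have qa0 : 0 <= qa by have := H 0; rewrite expr2; nra.
  pose t := (2 * `|B| + qa + 1) / (- qb) + 1.
  have Hqb : 0 < - qb by rewrite oppr_gt0.
  have ht : t * (- qb) = 2 * `|B| + qa + 1 - qb.
    by rewrite /t mulrDl divfK ?gt_eqF // mul1r.
  have t1 : 1 <= t by rewrite /t lerDr divr_ge0 //; [have := normr_ge0 B; lra | lra].
  have hB : t * B <= t * `|B|.
    by rewrite ler_wpM2l ?ler_norm //; lra.
  have hc : (2 * `|B| + qa + 1) * t <= t * t * (- qb).
    rewrite -mulrA ht mulrC ler_wpM2l //; lra.
  have hX : qa <= t * qa.
    by rewrite -{1}(mul1r qa) ler_wpM2r.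
  clearbody t.
  have := H t; rewrite expr2; lra.
case: (ler0P qb) => qb1.
  have qbe : qb = 0 by apply/eqP; rewrite eq_le qb1 qb0.
  subst qb.
  have qa0 : 0 <= qa by have := H 0; rewrite expr2; nra.
  case: (eqVneq B 0) => [->|Bn]; first by rewrite expr0n /= mulr0.
  have := H (- (qa + 1) / (2 * B)).
  have -> : 2 * (- (qa + 1) / (2 * B)) * B = - (qa + 1) by field.
  lra.
have := H (- B / qb).
have -> : qa + 2 * (- B / qb) * B + (- B / qb) ^+ 2 * qb = qa - B ^+ 2 / qb.
  by field; rewrite gt_eqF.
rewrite subr_ge0 ler_pdivrMr // => h; rewrite mulrC; lra.
Qed.

Lemma psd_CS S a b : psd S -> (dotv b (S *m a)) ^+ 2 <= Q S a * Q S b.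
Proof.
case=> hS hpos; apply: disc_le => t; rewrite -Q_expand //; exact: hpos.
Qed.

Lemma CS a b : (dotv a b) ^+ 2 <= dotv a a * dotv b b.
Proof.
have h : psd (1%:M : 'M[R]_p) by split; [rewrite trmx1 | move=> u; rewrite mul1mx dotv_ge0].
by have := psd_CS _ b a h; rewrite /Q !mul1mx mulrC.
Qed.

Lemma norm2_sqr a : norm2 a ^+ 2 = dotv a a.
Proof. by rewrite /norm2 sqr_sqrtr // dotv_ge0. Qed.

Lemma norm2_ge0 a : 0 <= norm2 a.
Proof. exact: sqrtr_ge0. Qed.


Lemma sqr_normr (x : R) : `|x| ^+ 2 = x ^+ 2.
Proof. exact: real_normK (num_real x). Qed.

Definition specset S :=
  [set norm2 (S *m u) | u in [set u : 'cV[R]_p | norm2 u <= 1]]%classic.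

Lemma coord_le a j : a j 0 ^+ 2 <= dotv a a.
Proof.
rewrite /dotv (bigD1 j) //= -expr2 lerDl; apply: sumr_ge0 => i _.
by rewrite -expr2 sqr_ge0.
Qed.

Lemma spec_bounded S : has_ubound (specset S).
Proof.
pose r i := \sum_j `|S i j|.
exists (Num.sqrt (\sum_i r i ^+ 2)) => _ [u hu <-].
rewrite /norm2 ler_wsqrtr // /dotv; apply: ler_sum => i _.
rewrite -expr2.
have hd : dotv u u <= 1.
  have := norm2_sqr u; have := norm2_ge0 u; move: hu => /= hu; nra.
have hj : forall j, `|u j 0| <= 1.
  move=> j; have := coord_le u j; rewrite -sqr_normr; have := normr_ge0 (u j 0); nra.
have hi : `|(S *m u) i 0| <= r i.
  rewrite mxE; apply: le_trans (ler_norm_sum _ _ _) _; apply: ler_sum => j _.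
  by rewrite normrM ler_piMr.
rewrite -sqr_normr; have := normr_ge0 ((S *m u) i 0); nra.
Qed.

Lemma spec_ge0 S : 0 <= specnorm S.
Proof.
apply: ub_le_sup; first exact: spec_bounded.
exists 0; first by rewrite /= /norm2 dotv0r sqrtr0.
by rewrite mulmx0 /norm2 dotv0r sqrtr0.
Qed.

Lemma spec_bound S x : dotv (S *m x) (S *m x) <= specnorm S ^+ 2 * dotv x x.
Proof.
have L0 := spec_ge0 S.
case: (eqVneq (dotv x x) 0) => [/dotv_eq0 ->|hx].
  by rewrite mulmx0 dotv0r mulr0.
have r0 : 0 < norm2 x.
  rewrite lt_def norm2_ge0 andbT; apply: contra hx => /eqP h.
  by rewrite -norm2_sqr h expr0n.
pose y := (norm2 x)^-1 *: x.
have hy : norm2 y <= 1.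
  rewrite /norm2 /y dotvZl dotvZr -norm2_sqr mulrA -expr2 -exprMn mulVf ?gt_eqF //.
  by rewrite expr1n sqrtr1.
have hSy : norm2 (S *m y) <= specnorm S.
  by apply: ub_le_sup; [exact: spec_bounded | exists y].
have : norm2 (S *m y) ^+ 2 <= specnorm S ^+ 2.
  by rewrite ler_pXn2r // ?nnegrE ?norm2_ge0.
rewrite norm2_sqr /y -scalemxAr dotvZl dotvZr mulrA -expr2 -(norm2_sqr x).
by rewrite exprVn mulrC ler_pdivrMr ?exprn_gt0.
Qed.


Lemma dotv_delta (i : 'I_p) (v : 'cV[R]_p) : dotv (delta_mx i 0) v = v i 0.
Proof.
rewrite /dotv (bigD1 i) //= big1 ?addr0; first by rewrite mxE !eqxx mul1r.
by move=> j hj; rewrite mxE (negbTE hj) mul0r.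
Qed.

Lemma norm1_upd (z : 'cV[R]_p) (i : 'I_p) (t : R) :
  norm1 (z + t *: delta_mx i 0) = norm1 z - `|z i 0| + `|z i 0 + t|.
Proof.
rewrite /norm1 (bigD1 i) //= [in RHS](bigD1 i) //=.
rewrite !mxE !eqxx mulr1 (addrC `|z i 0|) addrK addrC.
congr (_ + _); apply: eq_bigr => j hj; rewrite !mxE (negbTE hj) mulr0 addr0.
by [].
Qed.

Lemma kkt S (w z : 'cV[R]_p) (xi : R) (i : 'I_p) : psd S -> 0 < xi ->
  (forall th, zn_obj S w xi z <= zn_obj S w xi th) -> z i 0 != 0 ->
  xi <= `|(S *m (z - w)) i 0|.
Proof.
move=> hpsd xi0 opt nz; have [hS hpos] := hpsd.
set u := z - w; set g := S *m u; set e : 'cV[R]_p := delta_mx i 0.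
set a := `|z i 0|; set q := Q S e.
have a0 : 0 < a by rewrite normr_gt0.
have q0 : 0 <= q by exact: hpos.
have key : forall s, 0 < s -> s <= 1 -> xi <= `|g i 0| + s * (a * q / 2).
  move=> s s0 s1.
  have := opt (z + (- (s * z i 0)) *: e).
  rewrite /zn_obj -/(Q S _) -/(Q S _) norm1_upd.
  have -> : z + - (s * z i 0) *: e - w = u + - (s * z i 0) *: e by rewrite addrAC.
  rewrite Q_expand // dotv_delta -/g.
  have -> : `|z i 0 + - (s * z i 0)| = (1 - s) * a.
    by rewrite -{1}(mul1r (z i 0)) -mulrBl normrM ger0_norm // subr_ge0.
  set t := - (s * z i 0).
  have ht : t * g i 0 <= s * a * `|g i 0|.
    by rewrite (le_trans (ler_norm _)) // normrM /t normrN normrM (ger0_norm (ltW s0)).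
  have ht2 : t ^+ 2 = s ^+ 2 * a ^+ 2.
    by rewrite /t sqrrN exprMn sqr_normr.
  rewrite ht2 => h.
  have h2 : (s * a) * xi <= (s * a) * (`|g i 0| + s * (a * q / 2)).
    rewrite !expr2 -/u -/a -/q in h; clearbody t; lra.
  by rewrite -(ler_pM2l (mulr_gt0 s0 a0)).
rewrite leNgt; apply/negP => hlt.
set d := xi - `|g i 0|.
have d0 : 0 < d by rewrite subr_gt0.
set C := a * q / 2.
have C0 : 0 <= C by rewrite divr_ge0 // mulr_ge0 // ltW.
have Cd : 0 < C + d by lra.
have s0 : 0 < d / (C + d) by rewrite divr_gt0.
have s1 : d / (C + d) <= 1 by rewrite ler_pdivrMr // mul1r; lra.
have := key _ s0 s1; rewrite -/C.
have : d / (C + d) * C < d.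
  by rewrite mulrAC ltr_pdivrMr //; nra.
clearbody C; rewrite /d; lra.
Qed.


Lemma supp_bound (g z : 'cV[R]_p) xi : 0 < xi ->
  (forall i, z i 0 != 0 -> xi <= `|g i 0|) -> xi ^+ 2 * (norm0 z)%:R <= dotv g g.
Proof.
move=> xi0 H; rewrite /norm0 -[X in _ * X]sumr_const mulr_sumr big_mkcond /=.
apply: ler_sum => i _; case: ifP => hz; rewrite ?mulr1; last by rewrite -expr2 sqr_ge0.
rewrite inE in hz.
rewrite -expr2 -sqr_normr; have := H i hz; have := ltW xi0; nra.
Qed.

Lemma l1_on_CS (J : {set 'I_p}) (u : 'cV[R]_p) :
  (norm1_on J u) ^+ 2 <= #|J|%:R * dotv u u.
Proof.
pose a : 'cV[R]_p := \col_i ((i \in J)%:R).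
pose b : 'cV[R]_p := \col_i ((i \in J)%:R * `|u i 0|).
have hab : dotv a b = norm1_on J u.
  rewrite /dotv /norm1_on [RHS]big_mkcond /=; apply: eq_bigr => i _; rewrite !mxE.
  by case: (i \in J); rewrite /= ?mul1r ?mul0r.
have haa : dotv a a = #|J|%:R.
  rewrite /dotv -sumr_const [RHS]big_mkcond /=; apply: eq_bigr => i _; rewrite !mxE.
  by case: (i \in J); rewrite /= ?mul1r ?mul0r.
have hbb : dotv b b <= dotv u u.
  apply: ler_sum => i _; rewrite !mxE.
  case: (i \in J); rewrite /= ?mul1r ?mul0r ?mulr0 -?expr2 ?sqr_ge0 //.
  by rewrite sqr_normr.
have := CS a b; rewrite hab haa => h; apply: le_trans h _.
by rewrite ler_wpM2l.
Qed.


Lemma norm1_split (J : {set 'I_p}) (v : 'cV[R]_p) :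
  norm1 v = norm1_on J v + norm1_on (~: J) v.
Proof.
rewrite /norm1 /norm1_on (bigID (fun i => i \in J)) /=; congr (_ + _).
by apply: eq_bigl => i; rewrite inE.
Qed.

End L.

Lemma stepD {R : realType} (k Q X N D A : R) : 0 < k -> 0 <= X -> 0 <= N -> 0 < Q ->
  Q * Q <= 4 * X * (A * A) -> A * A <= N * D -> k * D <= Q -> k * Q <= 4 * X * N.
Proof.
move=> k0 X0 N0 Qp s1 s2 s3.
have s1' := ler_wpM2l (ltW k0) s1.
have s2' := ler_wpM2l (ltW k0) (ler_wpM2l (mulr_ge0 (ler0n R 4) X0) s2).
have s3' := ler_wpM2l (mulr_ge0 (ler0n R 4) X0) (ler_wpM2l N0 s3).
have t1 : Q * (k * Q) <= Q * (4 * X * N).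
  have -> : Q * (k * Q) = k * (Q * Q) by ring.
  apply: (le_trans s1'); apply: (le_trans s2').
  have -> : k * (4 * X * (N * D)) = 4 * X * (N * (k * D)) by ring.
  apply: (le_trans s3'); have -> : Q * (4 * X * N) = 4 * X * (N * Q) by ring.
  by [].
by rewrite ler_pM2l in t1.
Qed.

Theorem lemma2p1 (R : realType) (p : nat) (Sigma : 'M[R]_p)
  (theta0 : 'cV[R]_p) (xi : R) (thetaZN : 'cV[R]_p) :
  psd Sigma ->
  0 < xi ->
  (forall theta : 'cV[R]_p,
      zn_obj Sigma theta0 xi thetaZN <= zn_obj Sigma theta0 xi theta) ->
  0 < re_const Sigma (norm0 theta0) 1 ->
  (norm0 thetaZN)%:R
    <= (1 + 4 * specnorm Sigma / re_const Sigma (norm0 theta0) 1)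
       * (norm0 theta0)%:R.
Proof.
move=> hpsd xi0 opt k0; have [hS hpos] := hpsd.
set n0 := norm0 theta0; set k := re_const _ _ _; set L := specnorm Sigma.
set u := thetaZN - theta0; set g := Sigma *m u.
have L0 : 0 <= L := spec_ge0 Sigma.
have hB : xi ^+ 2 * (norm0 thetaZN)%:R <= dotv g g.
  by apply: supp_bound => // i hz; exact: (@kkt _ _ Sigma theta0 thetaZN xi i hpsd xi0 opt hz).
have Qu0 : 0 <= Q Sigma u by exact: hpos.
have hC : dotv g g <= L * Q Sigma u.
  set h := Sigma *m g.
  have e1 : dotv g g = dotv u h by rewrite /h (dotv_sym _ u g hS).
  have c1 := psd_CS _ g u hpsd.
  have c2 := CS g h.
  have c3 := spec_bound Sigma g.
  have G0 : 0 <= dotv g g := dotv_ge0 g.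
  have hh0 : 0 <= dotv h h := dotv_ge0 h.
  have Qg : Q Sigma g <= L * dotv g g.
    have e2 : Q Sigma g = dotv g h by [].
    rewrite e2; rewrite e2 in c1.
    have : dotv g h ^+ 2 <= (L * dotv g g) ^+ 2.
      apply: le_trans c2 _; rewrite exprMn.
      have := ler_wpM2l G0 c3; rewrite !expr2; nra.
    have := mulr_ge0 L0 G0; rewrite !expr2; nra.
  rewrite -e1 in c1.
  have : dotv g g ^+ 2 <= dotv g g * (L * Q Sigma u).
    by apply: le_trans c1 _; rewrite mulrA ler_wpM2r // mulrC.
  move=> h2; have := mulr_ge0 L0 Qu0; move: h2; rewrite !expr2; nra.
set J := [set i : 'I_p | theta0 i 0 != 0].
have cardJ : #|J| = n0.
  rewrite /n0 /norm0; apply: eq_card => i; rewrite !inE.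
  by apply/idP/idP => h; [rewrite in_setE | rewrite in_setE in h].
set A := norm1_on J u; set Bc := norm1_on (~: J) u.
have A0 : 0 <= A by apply: sumr_ge0 => i _.
have Bc0 : 0 <= Bc by apply: sumr_ge0 => i _.
have hopt := opt theta0.
rewrite /zn_obj subrr mulmx0 dotv0r mulr0 add0r -/(Q Sigma _) -/u in hopt.
rewrite (norm1_split J thetaZN) (norm1_split J theta0) in hopt.
have e0 : norm1_on (~: J) theta0 = 0.
  by apply: big1 => i; rewrite !inE negbK => /eqP ->; rewrite normr0.
have ez : norm1_on (~: J) thetaZN = Bc.
  by apply: eq_bigr => i; rewrite !inE negbK => /eqP h; rewrite /u !mxE h subr0.
have et : norm1_on J theta0 <= norm1_on J thetaZN + A.
  rewrite /A -big_split; apply: ler_sum => i _; rewrite /u !mxE.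
  have h := ler_normB (thetaZN i 0) (thetaZN i 0 - theta0 i 0).
  have e : theta0 i 0 = thetaZN i 0 - (thetaZN i 0 - theta0 i 0) by ring.
  by rewrite {1}e.
have et' := ler_wpM2l (ltW xi0) et.
rewrite e0 ez addr0 !mulrDr in hopt; rewrite mulrDr in et'.
have hQ : 2^-1 * Q Sigma u + xi * Bc <= xi * A by lra.
have cone : Bc <= 1 * A.
  rewrite mul1r -(ler_pM2l xi0).
  have : 0 <= 2^-1 * Q Sigma u by rewrite mulr_ge0 // invr_ge0.
  lra.
have hk : k * dotv u u <= Q Sigma u.
  case: (eqVneq (dotv u u) 0) => [->|hu]; first by rewrite mulr0.
  have u0 : u != 0 by apply: contra hu => /eqP ->; rewrite dotv0r.
  have lb : has_lbound [set dotv v (Sigma *m v) / (norm2 v ^+ 2) | v in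
        [set v : 'cV[R]_p | v != 0 /\ exists J : {set 'I_p},
           (#|J| <= n0)%N /\ norm1_on (~: J) v <= 1 * norm1_on J v]]%classic.
    exists 0 => _ [v _ <-]; apply: divr_ge0; [exact: hpos | exact: sqr_ge0].
  have := ge_inf lb; move=> /(_ (Q Sigma u / norm2 u ^+ 2)) H.
  have : k <= Q Sigma u / norm2 u ^+ 2.
    apply: H; exists u => //; split => //; exists J; split => //.
    by rewrite cardJ.
  have Dp : 0 < dotv u u by rewrite lt_def hu dotv_ge0.
  by rewrite norm2_sqr ler_pdivlMr.
have hA : A ^+ 2 <= n0%:R * dotv u u by rewrite -cardJ; exact: l1_on_CS.
have D0 := dotv_ge0 u.
have hD : k * Q Sigma u <= 4 * xi ^+ 2 * n0%:R.
  have N0 : 0 <= (n0%:R : R) by [].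
  have X0 : 0 <= xi ^+ 2 by exact: sqr_ge0.
  have k0' := ltW k0.
  have hQ2 : Q Sigma u <= 2 * xi * A by have := mulr_ge0 (ltW xi0) Bc0; lra.
  have h1 : Q Sigma u * Q Sigma u <= 4 * xi ^+ 2 * (A * A).
    have := ltW xi0; rewrite expr2; nra.
  rewrite expr2 in hA.
  case: (eqVneq (Q Sigma u) 0) => [->|Qn]; first by rewrite mulr0 mulr_ge0 // mulr_ge0.
  have Qp : 0 < Q Sigma u by rewrite lt_def Qn Qu0.
  exact: stepD k0 X0 N0 Qp h1 hA hk.
set Nz := ((norm0 thetaZN)%:R : R).
have Nz0 : 0 <= Nz by [].
have N0 : 0 <= (n0%:R : R) by [].
have X0 : 0 < xi ^+ 2 by exact: exprn_gt0.
have h1 : k * (xi ^+ 2 * Nz) <= k * (L * Q Sigma u).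
  by apply: ler_wpM2l; [exact: ltW | exact: le_trans hB hC].
have h2 : L * (k * Q Sigma u) <= L * (4 * xi ^+ 2 * n0%:R) by rewrite ler_wpM2l.
have h3 : xi ^+ 2 * (k * Nz) <= xi ^+ 2 * (4 * L * n0%:R).
  move: h1 h2; set X := xi ^+ 2; set N := (n0%:R : R); set QQ := Q Sigma u.
  clearbody X N QQ Nz; move=> h1 h2.
  have -> : X * (k * Nz) = k * (X * Nz) by ring.
  have -> : X * (4 * L * N) = L * (4 * X * N) by ring.
  apply: le_trans h1 _; have -> : k * (L * QQ) = L * (k * QQ) by ring.
  exact: h2.
rewrite ler_pM2l // in h3.
have h4 : Nz <= 4 * L * n0%:R / k by rewrite ler_pdivlMr // mulrC.
rewrite mulrDl mul1r mulrAC; lra.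
Qed.
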